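(* Let $(\mathcal{X},\rho,\nu)$ be a metric measure space, where $\rho$ is a separable metric and $\nu$ is a finite Borel measure. Let $\mathbb{X}=(X_n)_{n\ge 0}$ be a stochastic process in $\mathcal{X}$ that is ergodically dominated by $\nu$, and let $\eta:\mathcal{X}\to\mathcal{Y}$ be a measurable label function with $\nu$-negligible boundary, i.e. $\nu(\partial_\eta\mathcal{X})=0$. Then the nearest neighbor rule is online consistent with respect to $(\mathbb{X},\eta)$: for any nearest neighbor process $(\tilde X_n)_{n\ge1}$ of $\mathbb{X}$, \[\limsup_{N\to\infty}\frac1N\sum_{n=1}^N \mathbb{1}\{\eta(X_n)\neq\eta(\tilde X_n)\}=0\quad\text{almost surely.}\]
   Context: For a process $\mathbb{X}=(X_n)_{n\ge0}$, write $\mathbb{X}_{<n}=\{X_0,\dots,X_{n-1}\}$. A nearest neighbor process of $\mathbb{X}$ is any process $(\tilde X_n)_{n\ge1}$ with $\tilde X_n\in\arg\min_{x\in\mathbb{X}_{<n}}\rho(X_n,x)$. For a measurable $\eta:\mathcal{X}\to\mathcal{Y}$, $\mathrm{margin}_\eta(x)=\inf\{\rho(x,x'): \eta(x')\neq\eta(x)\}$ (infimum of the empty set is $+\infty$), and the boundary is $\partial_\eta\mathcal{X}=\{x:\mathrm{margin}_\eta(x)=0\}$. The process $\mathbb{X}$ is ergodically dominated by $\nu$ if for every $\epsilon>0$ there is $\delta>0$ such that every measurable $A\subset\mathcal{X}$ with $\nu(A)<\delta$ satisfies $\limsup_{N\to\infty}\frac1N\sum_{n=1}^N\mathbb{1}\{X_n\in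 A\}<\epsilon$ almost surely. *)

(* Defs.v *)
From HB Require Import structures.
From mathcomp Require Import all_boot all_order all_algebra.
From mathcomp Require Import all_classical all_reals all_analysis.
Set Implicit Arguments. Unset Strict Implicit. Unset Printing Implicit Defensive.
Import Order.TTheory GRing.Theory Num.Theory.
Local Open Scope classical_set_scope.
Local Open Scope ring_scope.

Section Defs.
Context {R : realType} {T : Type}.

Definition is_metric (rho : T -> T -> R) : Prop :=
  (forall x y, 0 <= rho x y) /\
  (forall x y, rho x y = 0 <-> x = y) /\
  (forall x y, rho x y = rho y x) /\
  (forall x y z, rho x z <= rho x y + rho y z).

Definition separable_metric (rho : T -> T -> R) : Prop :=
  exists D : set T, countable D /\
    forall x (e : R), 0 < e -> exists2 y, D y & rho x y < e.

Definition rho_open (rho : T -> T -> R) : set (set T) :=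
  [set A | forall x, A x -> exists2 r : R, 0 < r & [set y | rho x y < r] `<=` A].

(* margin_eta(x) = inf { rho(x,x') : eta x' <> eta x }, with inf set0 = +oo *)
Definition margin {Y : Type} (rho : T -> T -> R) (eta : T -> Y) (x : T) : \bar R :=
  ereal_inf [set (rho x x')%:E | x' in [set x' | eta x' <> eta x]].

Definition boundary {Y : Type} (rho : T -> T -> R) (eta : T -> Y) : set T :=
  [set x | margin rho eta x = 0%E].

Definition nn_process {Omega : Type} (rho : T -> T -> R)
    (X Xt : nat -> Omega -> T) : Prop :=
  forall n w, (0 < n)%N ->
    (exists2 k, (k < n)%N & Xt n w = X k w) /\
    (forall k, (k < n)%N -> rho (X n w) (Xt n w) <= rho (X n w) (X k w)).

Definition freq {Omega : Type} (X : nat -> Omega -> T) (A : set T)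
    (w : Omega) (N : nat) : R :=
  (\sum_(1 <= n < N.+1) (\1_A (X n w) : R)) / N%:R.
End Defs.

Definition ergodically_dominated {R : realType} {d0 d : measure_display}
    {Omega : measurableType d0} {T : measurableType d}
    (P : probability Omega R) (nu : set T -> \bar R) (X : nat -> Omega -> T) : Prop :=
  forall eps : R, 0 < eps -> exists2 delta : R, 0 < delta &
    forall A : set T, measurable A -> (nu A < delta%:E)%E ->
      {ae P, forall w, (limn_esup (fun N => (freq X A w N)%:E) < eps%:E)%E}.

(* Main.v *)
Require Import Defs.
From HB Require Import structures.
From mathcomp Require Import all_boot all_order all_algebra.
From mathcomp Require Import all_classical all_reals all_analysis.
From mathcomp Require Import lra.
Import Order.TTheory GRing.Theory Num.Theory.
Local Open Scope classical_set_scope.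
Local Open Scope ring_scope.

Lemma esup_ev_lt (R : realType) (u : (\bar R)^nat) (l : R) :
  (limn_esup u < l%:E)%E -> exists M, forall n, (M <= n)%N -> (u n < l%:E)%E.
Proof.
move=> hl; apply: contrapT => hM; move: hl; apply/negP; rewrite -leNgt.
rewrite limn_esup_lim; apply: lime_ge; first exact: is_cvg_esups.
apply: nearW => M.
have [n Mn hn] : exists2 n, (M <= n)%N & (l%:E <= u n)%E.
  apply: contrapT => hn; apply: hM; exists M => n Mn.
  rewrite ltNge; apply/negP => h; apply: hn; by exists n.
apply: (le_trans hn); apply: ereal_sup_ubound; by exists n.
Qed.

Lemma esup_le_ev (R : realType) (u : (\bar R)^nat) (l : \bar R) :
  (exists M, forall n, (M <= n)%N -> (u n <= l)%E) -> (limn_esup u <= l)%E.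
Proof.
move=> [M hM]; rewrite limn_esup_lim; apply: lime_le; first exact: is_cvg_esups.
exists M => // n /= Mn; apply: ge_ereal_sup => _ [k /= nk <-].
apply: hM; exact: leq_trans nk.
Qed.

Lemma esup_ge0 (R : realType) (u : (\bar R)^nat) :
  (forall n, (0 <= u n)%E) -> (0 <= limn_esup u)%E.
Proof.
move=> h; rewrite limn_esup_lim; apply: lime_ge; first exact: is_cvg_esups.
apply: nearW => n; apply: (le_trans (h n)); apply: ereal_sup_ubound => /=; by exists n => /=.
Qed.

Definition goodc (R : realType) (T : Type) (Y : Type) (rho : T -> T -> R)
  (eta : T -> Y) (e : nat -> T) (i m : nat) : Prop :=
  forall y, rho (e i) y < 3 / m.+1%:R -> eta y = eta (e i).

Arguments goodc {R T Y}.
Definition Bset (R : realType) (T : Type) (Y : Type) (rho : T -> T -> R)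
  (eta : T -> Y) (e : nat -> T) (i m : nat) : set T :=
  [set y | goodc rho eta e i m /\ rho (e i) y < m.+1%:R^-1].

Arguments Bset {R T Y}.
Definition Wset (R : realType) (T : Type) (Y : Type) (rho : T -> T -> R)
  (eta : T -> Y) (e : nat -> T) (K : nat) : set T :=
  [set y | exists i m, (i < K)%N /\ (m < K)%N /\ Bset rho eta e i m y].

Arguments Wset {R T Y}.
Lemma count_bound (R : realType) (T : Type) (Y : eqType) (rho : T -> T -> R)
  (eta : T -> Y) (e : nat -> T) (x xt : nat -> T) (K : nat) :
  (forall a b c, rho a c <= rho a b + rho b c) -> (forall a b, rho a b = rho b a) ->
  (forall n, (0 < n)%N -> forall k, (k < n)%N -> rho (x n) (xt n) <= rho (x n) (x k)) ->
  forall N, \sum_(1 <= n < N.+1) (if eta (x n) == eta (xt n) then 0 else 1 : R)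
    <= (K * K)%:R + \sum_(1 <= n < N.+1) (\1_(~` Wset rho eta e K) (x n) : R).
Proof.
move=> tri sym nn N.
pose S (N : nat) : {set 'I_K * 'I_K} :=
  finset (fun p : 'I_K * 'I_K => `[< exists k, (k <= N)%N /\ Bset rho eta e p.1 p.2 (x k) >]).
suff : \sum_(1 <= n < N.+1) (if eta (x n) == eta (xt n) then 0 else 1 : R)
    <= (#|S N|)%:R + \sum_(1 <= n < N.+1) (\1_(~` Wset rho eta e K) (x n) : R).
  move/le_trans; apply; rewrite lerD2r ler_nat.
  by apply: leq_trans (max_card _) _; rewrite card_prod !card_ord.
elim: N => [|N IH]; first by rewrite !big_geq.
have sub : S N \subset S N.+1.
  apply/fintype.subsetP => p; rewrite !inE.
  move=> [k [kN hk]].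
  by exists k; split => //; apply: leqW.
rewrite big_nat_recr //= [X in _ <= _ + X]big_nat_recr //=.
suff h : (if eta (x N.+1) == eta (xt N.+1) then 0 else 1 : R) <=
   (#|S N.+1|)%:R - (#|S N|)%:R + \1_(~` Wset rho eta e K) (x N.+1).
  apply: (le_trans (lerD IH h)).
  have E : forall a b c d : R, a + b + (c - a + d) <= c + (b + d) by move=> *; lra.
  exact: E.
have le1 : (#|S N|)%:R <= (#|S N.+1|)%:R :> R by rewrite ler_nat subset_leq_card.
rewrite indicE.
case: (boolP (eta (x N.+1) == eta (xt N.+1))) => heq.
  have : 0 <= ((x N.+1 \in ~` Wset rho eta e K)%:R : R) by [].
  by lra.
case: (boolP (x N.+1 \in ~` Wset rho eta e K)) => hW.
  by rewrite /=; lra.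
move/negP: hW; rewrite in_setE /= => /contrapT [i [m [iK [mK hB]]]].
pose p : 'I_K * 'I_K := (Ordinal iK, Ordinal mK).
have pN1 : p \in S N.+1 by rewrite inE; apply/asboolP; exists N.+1.
have pN : p \notin S N.
  apply/negP; rewrite inE => /asboolP [k [kN hk]].
  move: heq => /negP; apply; apply/eqP.
  move: hB hk; rewrite /Bset /= => -[good h1] [_ h2].
  have hxk : rho (x N.+1) (xt N.+1) <= rho (x N.+1) (x k) by apply: nn.
  have h3 : rho (x N.+1) (x k) <= rho (x N.+1) (e i) + rho (e i) (x k) by apply: tri.
  have h4 : rho (e i) (xt N.+1) <= rho (e i) (x N.+1) + rho (x N.+1) (xt N.+1) by apply: tri.
  have hm : 0 < m.+1%:R^-1 :> R by rewrite invr_gt0 ltr0n.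
  have h1' := h1; rewrite sym in h1'; move: good; rewrite /goodc.
  move: (m.+1%:R^-1) h1 h1' h2 hm => t h1 h1' h2 hm good.
  rewrite (good (x N.+1)); last by lra.
  rewrite (good (xt N.+1)) //; lra.
have : (#|S N| < #|S N.+1|)%N.
  apply: proper_card; rewrite fintype.properE sub /=.
  by apply/negP => /fintype.subsetP h; move: pN; rewrite (h p pN1).
move=> hlt.
have : ((#|S N|).+1)%:R <= (#|S N.+1|)%:R :> R by rewrite ler_nat.
rewrite -natr1 /=.
lra.
Qed.

Theorem theorem1 (R : realType) (d0 d d' : measure_display)
  (Omega : measurableType d0) (P : probability Omega R)
  (T : measurableType d) (rho : T -> T -> R)
  (nu : {finite_measure set T -> \bar R})
  (Y : measurableType d') (eta : T -> Y)
  (X : nat -> Omega -> T) :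
  is_metric rho ->
  separable_metric rho ->
  (@measurable d T) = <<s rho_open rho >> ->
  (forall n, measurable_fun setT (X n)) ->
  ergodically_dominated P nu X ->
  measurable_fun setT eta ->
  nu.-negligible (boundary rho eta) ->
  forall Xt : nat -> Omega -> T,
    (forall n, (0 < n)%N -> measurable_fun setT (Xt n)) ->
    nn_process rho X Xt ->
    {ae P, forall w,
      limn_esup (fun N => ((\sum_(1 <= n < N.+1)
          (if eta (X n w) == eta (Xt n w) then 0 else 1 : R)) / N%:R)%:E) = 0%E}.
Proof.
move=> [hpos [hzero [hsym htri]]] [D [Dc Ddense]] hmeas mX hergo meta
  [N0 [mN0 nuN0 bN0]] Xt mXt hnn.
move/countable_injP: Dc => [f finj].
pose e n := xget (point : T) [set x | D x /\ f x = n].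
have edense : forall x r, 0 < r -> exists i, rho x (e i) < r.
  move=> x r r0; have [y Dy hy] := Ddense x r r0; exists (f y).
  have : [set x | D x /\ f x = f y] (e (f y)) by apply: xgetPex; exists y.
  move=> [De fe]; suff -> : e (f y) = y by [].
  by apply: finj; rewrite ?in_setE.
pose W K := Wset rho eta e K.
have ball_meas : forall c r, measurable [set y | rho c y < r].
  move=> c r; rewrite hmeas; apply: sub_sigma_algebra => z hz.
  exists (r - rho c z); first by rewrite subr_gt0.
  move=> y /= hy; have := htri c z y; lra.
have mW : forall K, measurable (W K).
  move=> K.
  have -> : W K = \bigcup_i \bigcup_m (if pselect ((i < K)%N /\ (m < K)%N /\ goodc rho eta e i m)
     then [set y | rho (e i) y < m.+1%:R^-1] else set0).
    apply/seteqP; split => y.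
      move=> [i [m [iK [mK [g h]]]]]; exists i => //; exists m => //.
      by case: pselect => //= -[]; tauto.
    move=> [i _ [m _]]; case: pselect => [[iK [mK g]] h|_ //].
    by exists i, m.
  apply: bigcupT_measurable => i; apply: bigcupT_measurable => m.
  by case: pselect => H; [exact: ball_meas | exact: measurable0].
have bnd : forall x, (forall K, ~ W K x) -> boundary rho eta x.
  move=> x hx.
  have key : forall r, 0 < r -> exists x', eta x' <> eta x /\ rho x x' < r.
    move=> r r0; apply: contrapT => hno.
    have r4 : 0 < r / 4 by rewrite divr_gt0.
    have [m hm] := ltr_add_invr r4; rewrite add0r in hm.
    have mpos : 0 < m.+1%:R^-1 :> R by rewrite invr_gt0 ltr0n.
    have [i hi] := edense x (m.+1%:R^-1) mpos.
    have near_eq : forall y, rho x y < r -> eta y = eta x.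
      move=> y hy; apply: contrapT => ney; apply: hno; by exists y.
    apply: (hx (maxn i m).+1); exists i, m; split; first by rewrite ltnS leq_maxl.
    split; first by rewrite ltnS leq_maxr.
    split; last by rewrite hsym.
    move=> y hy.
    have h2 : rho x (e i) < r.
      by move: (m.+1%:R^-1) hm hi mpos => t hm hi mpos; lra.
    have h1 : rho x y < r.
      have := htri x (e i) y; move: hy; rewrite /= -[3 / _]/(3 * m.+1%:R^-1).
      move: (m.+1%:R^-1) hm hi mpos => t hm hi mpos; lra.
    by rewrite (near_eq y h1) (near_eq (e i) h2).
  rewrite /boundary /=; apply/eqP; rewrite eq_le; apply/andP; split.
    apply/lee_addgt0Pr => r r0; rewrite add0e.
    have [x' [ne hx']] := key r r0.
    apply: (le_trans (ereal_inf_lbound _)); first by exists x'.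
    by rewrite lee_fin ltW.
  by apply: le_ereal_inf_tmp => _ [x' _ <-]; rewrite lee_fin hpos.
have nuW : forall delta, 0 < delta -> exists K, (nu (~` W K) < delta%:E)%E.
  have cvg : (nu \o (fun K => ~` W K)) @ \oo --> nu (\bigcap_K ~` W K).
    apply: nonincreasing_cvg_mu.
    - by rewrite ltey_eq fin_num_measure //; apply: measurableC.
    - by move=> K; apply: measurableC.
    - by apply: bigcapT_measurable => K; apply: measurableC.
    - move=> a b ab; apply/subsetPset => y hy hb; apply: hy.
      move: hb => [i [m [iK [mK hB]]]]; exists i, m; split; last split => //.
        exact: leq_trans iK ab.
      exact: leq_trans mK ab.
  have nu0 : nu (\bigcap_K ~` W K) = 0%E.
    apply/eqP; rewrite eq_le measure_ge0 andbT -nuN0; apply: le_measure.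
    - by rewrite in_setE; apply: bigcapT_measurable => K; apply: measurableC.
    - by rewrite in_setE.
    - by move=> y hy; apply: bN0; apply: bnd => K; apply: (hy K).
  move=> delta dl0; apply: contrapT => H.
  have : (delta%:E <= lim (nu \o (fun K => ~` W K) @ \oo))%E.
    apply: lime_ge; first by apply/cvg_ex; eexists; exact: cvg.
    apply: nearW => K; rewrite leNgt; apply/negP => h; apply: H; by exists K.
  rewrite (cvg_lim _ cvg) // nu0 lee_fin; lra.
pose a w N := ((\sum_(1 <= n < N.+1)
          (if eta (X n w) == eta (Xt n w) then 0 else 1 : R)) / N%:R).
have a0 : forall w N, 0 <= a w N.
  move=> w N; apply: divr_ge0 => //; apply: sumr_ge0 => n _.
  by case: ifP.
have step : forall m : nat,
    {ae P, forall w, (limn_esup (fun N => (a w N)%:E) <= (2 * m.+1%:R^-1)%:E)%E}.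
  move=> m; set eps := m.+1%:R^-1.
  have eps0 : 0 < eps by rewrite invr_gt0 ltr0n.
  have [delta dl0 hd] := hergo eps eps0.
  have [K hK] := nuW delta dl0.
  have := hd (~` W K) (measurableC (mW K)) hK.
  apply: filterS => w hw.
  have [M hM] := esup_ev_lt _ _ _ hw.
  apply: (esup_le_ev _ _ _); exists (maxn M (K * K * m.+1)).+1 => n hn.
  have hMn : (M <= n)%N.
    exact: leq_trans (leq_maxl _ _) (ltnW hn).
  have hKn : (K * K * m.+1 <= n)%N.
    exact: leq_trans (leq_maxr _ _) (ltnW hn).
  have := hM n hMn; rewrite /freq lte_fin => hc.
  have npos : 0 < n%:R :> R.
    by rewrite ltr0n; apply: leq_trans hn.
  have cb := @count_bound R T Y rho eta e (fun n => X n w) (fun n => Xt n w) K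
    htri hsym (fun n hn k hk => (hnn n w hn).2 k hk) n.
  rewrite lee_fin /a.
  have h1 : (K * K)%:R / n%:R <= eps.
    rewrite ler_pdivrMr // mulrC ler_pdivlMr ?ltr0n // -natrM ler_nat.
    exact: hKn.
  apply: (le_trans (ler_wpM2r _ cb)); first by rewrite invr_ge0 ltW.
  rewrite mulrDl; move: hc h1 eps0.
  rewrite /W; move: ((K * K)%:R / n%:R) => u; move: (_ / n%:R) => v.
  rewrite /eps; move: (m.+1%:R^-1) => t.
  move=> *; lra.
have := ae_foralln step.
apply: filterS => w hw.
apply/eqP; rewrite eq_le; apply/andP; split; last first.
  by apply: (esup_ge0 _ _) => n; rewrite lee_fin; apply: a0.
move: hw; rewrite -/(a w).
case: (limn_esup _) => [r | |] hw //; last first.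
  by have := hw 0%N.
rewrite lee_fin leNgt; apply/negP => r0.
have r2 : 0 < r / 2 by rewrite divr_gt0.
have [k hk] := ltr_add_invr r2; rewrite add0r in hk.
have := hw k; rewrite lee_fin.
move: (k.+1%:R^-1) hk => t hk; lra.
Qed.
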